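(* Let $T$ be a tree on $n$ vertices. Then $k(T)=2$ if and only if $T$ is a star or a balanced double star.
   Context: For a connected graph $G=(V,E)$ and $v\in V$, the status of $v$ is $s(v)=\sum_{u\in V} d(v,u)$, where $d$ is the shortest-path distance; $k(G)$ is the number of distinct status values of vertices of $G$. A star is a tree of diameter $2$, i.e. $K_{1,m}$ with $m\ge 2$. A balanced double star is a graph obtained from $K_2$ by appending $a\ge 1$ pendent vertices to each of its two vertices (the same $a$ for both). *)

(* Defs.v *)
From mathcomp Require Import all_boot.
From mathcomp Require Import fingraph.
Set Implicit Arguments. Unset Strict Implicit. Unset Printing Implicit Defensive.

Definition simple_graph (T : finType) (e : rel T) : Prop :=
  irreflexive e /\ symmetric e.

Definition connected_graph (T : finType) (e : rel T) : Prop :=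
  forall x y : T, connect e x y.

Definition acyclic_graph (T : finType) (e : rel T) : Prop :=
  forall c : seq T, 2 < size c -> ~~ (cycle e c && uniq c).

Definition is_tree (T : finType) (e : rel T) : Prop :=
  [/\ simple_graph e, connected_graph e & acyclic_graph e].

Definition walkn (T : finType) (e : rel T) (n : nat) (x y : T) : bool :=
  [exists p : n.-tuple T, path e x p && (last x p == y)].

(* shortest-path distance: least n such that a walk of length n from x to y
   exists (for a connected graph this is < #|T|) *)
Definition dist (T : finType) (e : rel T) (x y : T) : nat :=
  find (fun n => walkn e n x y) (iota 0 #|T|).

Definition status (T : finType) (e : rel T) (v : T) : nat :=
  \sum_(u : T) dist e v u.

Definition k_status (T : finType) (e : rel T) : nat :=
  size (undup [seq status e v | v <- enum T]).

Definition is_star (T : finType) (e : rel T) : Prop :=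
  2 < #|T| /\
  exists c : T, forall x y : T, e x y = ((x == c) && (y != c)) || ((y == c) && (x != c)).

(* K_2 = ab with a >= 1 pendant vertices attached to each of a and b *)
Definition is_balanced_double_star (T : finType) (e : rel T) : Prop :=
  exists (a b : T) (A B : {set T}),
    [/\ a != b, a \notin A :|: B, b \notin A :|: B & [disjoint A & B]] /\
    [/\ A :|: B :|: [set a; b] = setT, #|A| = #|B| & 0 < #|A|] /\
    forall x y : T,
      e x y = ((x == a) && (y == b)) || ((x == b) && (y == a))
            || ((x == a) && (y \in A)) || ((y == a) && (x \in A))
            || ((x == b) && (y \in B)) || ((y == b) && (x \in B)).

(* Main.v *)
Require Import Defs.
From mathcomp Require Import all_boot.
From mathcomp Require Import fingraph zify.
Set Implicit Arguments. Unset Strict Implicit. Unset Printing Implicit Defensive.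

Section Walks.
Variables (T : finType) (e : rel T).

Lemma walknP n x y :
  reflect (exists p, [/\ size p = n, path e x p & last x p = y]) (walkn e n x y).
Proof.
apply: (iffP existsP) => [[t /andP[H1 /eqP H2]]|[p [Hs H1 H2]]].
  by exists (val t); rewrite size_tuple.
have Hs' : size p == n by rewrite Hs.
by exists (Tuple Hs'); rewrite /= H1 H2 eqxx.
Qed.

Lemma dist_le x y p : path e x p -> last x p = y -> dist e x y <= size p.
Proof.
move=> H1 H2; rewrite /dist.
set s := iota 0 #|T|.
case: (ltnP (size p) #|T|) => Hp; last first.
  by apply: leq_trans (find_size _ _) _; rewrite size_iota.
rewrite leqNgt; apply/negP => Hlt.
have := before_find 0 Hlt; rewrite nth_iota // add0n => Hf.
have : walkn e (size p) x y by apply/walknP; exists p.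
by rewrite Hf.
Qed.

Hypothesis Hc : connected_graph e.

Lemma dist_walk x y : exists p, [/\ size p = dist e x y, path e x p & last x p = y].
Proof.
have [p Hp Hl] := connectP (Hc x y).
case: (shortenP Hp) Hl => p' Hp' Hu _ Hl.
have Hs : size p' < #|T|.
  have := max_card (mem (x :: p')).
  by move/card_uniqP: Hu => ->.
have Hw : walkn e (size p') x y by apply/walknP; exists p'.
have Hhas : has (fun n => walkn e n x y) (iota 0 #|T|).
  by apply/hasP; exists (size p') => //; rewrite mem_iota.
have := nth_find 0 Hhas; rewrite -/(dist e x y).
rewrite has_find size_iota in Hhas.
rewrite nth_iota // add0n => /walknP [q [H1 H2 H3]].
by exists q.
Qed.


Hypotheses (Hirr : irreflexive e) (Hsym : symmetric e) (Hac : acyclic_graph e).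
Notation d := (dist e).

Lemma dist_refl x : d x x = 0.
Proof. by apply/eqP; rewrite -leqn0; exact: (dist_le (p:=[::])). Qed.

Lemma dist0 x y : d x y = 0 -> x = y.
Proof. by have [[|z p] [Hs Hp Hl]] := dist_walk x y; rewrite -Hs. Qed.

Lemma dist_adj x y : e x y -> d x y = 1.
Proof.
move=> Hxy; have : d x y <= 1 by apply: (dist_le (p:=[:: y])) => //=; rewrite Hxy.
case: (d x y) (@dist0 x y) => [H|[|//]] _ //.
by have := Hirr x; rewrite {2}(H erefl) Hxy.
Qed.

Lemma dist1 x y : d x y = 1 -> e x y.
Proof.
move=> H; have [p [Hs Hp Hl]] := dist_walk x y; rewrite H in Hs.
case: p Hs Hp Hl => [|z [|]] //= _; rewrite andbT => Hz <-.
exact: Hz.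
Qed.

Lemma rev_walk x p : path e x p -> exists q,
  [/\ path e (last x p) q, last (last x p) q = x, size q = size p & {subset q <= x :: p}].
Proof.
move=> Hp; exists (rev (belast x p)); split.
- rewrite rev_path; have -> : path (fun z => e^~ z) x p = path e x p by apply: eq_path => a b; apply: Hsym.
  exact: Hp.
- rewrite -(last_cons x) -rev_rcons -lastI rev_cons last_rcons //.
- by rewrite size_rev size_belast.
- by move=> z; rewrite mem_rev => /mem_belast.
Qed.

Lemma dist_sym_le x y : d y x <= d x y.
Proof.
have [p [Hs Hp Hl]] := dist_walk x y.
have [q [H1 H2 H3 _]] := rev_walk Hp.
rewrite -Hs -H3; apply: dist_le; rewrite -?Hl //.
Qed.

Lemma dist_sym x y : d x y = d y x.
Proof. by apply/eqP; rewrite eqn_leq !dist_sym_le. Qed.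

Lemma dist_tri x y z : d x z <= d x y + d y z.
Proof.
have [p [Hs Hp Hl]] := dist_walk x y.
have [q [Hs' Hq Hl']] := dist_walk y z.
rewrite -Hs -Hs' -size_cat; apply: dist_le.
  by rewrite cat_path Hp Hl Hq.
by rewrite last_cat Hl.
Qed.

Lemma dist_adjtri u x w : e u x -> d x w <= d u w + 1.
Proof.
move=> H; apply: leq_trans (dist_tri x u w) _.
by rewrite dist_sym (dist_adj H) addnC.
Qed.

Lemma dist_split a w q y r : path e a (q ++ y :: r) -> last a (q ++ y :: r) = w ->
  size (q ++ y :: r) = d a w -> d y w = size r.
Proof.
move=> Hp Hl Hs; apply/eqP; rewrite eqn_leq; apply/andP; split.
  apply: dist_le; first by move: Hp; rewrite cat_path => /andP[_ /= /andP[]].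
  by move: Hl; rewrite last_cat.
have H1 : d a y <= size (rcons q y).
  by apply: dist_le; rewrite ?last_rcons // rcons_path; move: Hp; rewrite cat_path => /andP[-> /= /andP[->]].
have := dist_tri a y w; rewrite -Hs size_cat /=; rewrite size_rcons in H1.
lia.
Qed.

Lemma dist_inwalk a w p y : path e a p -> last a p = w -> size p = d a w ->
  y \in p -> d y w < d a w.
Proof.
move=> Hp Hl Hs Hy; case/splitPr: Hy Hp Hl Hs => q r Hp Hl Hs.
rewrite (dist_split Hp Hl Hs) -Hs size_cat /=; lia.
Qed.


Lemma no_bypass u x v p : e x u -> e v u -> x != v -> path e x p -> last x p = v ->
  u \notin x :: p -> False.
Proof.
move=> Hxu Hvu Hxv Hp Hl Hu.
case: (shortenP Hp) Hl => p' Hp' Hu' Hsub Hl.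
have Hu2 : u \notin x :: p'.
  apply/negP; rewrite inE => /orP[/eqP Hux|Hup].
    by move: Hu; rewrite Hux mem_head.
  by move: Hu; rewrite inE (Hsub _ Hup) orbT.
case: p' Hp' Hu' Hsub Hl Hu2 => [|y p'] Hp' Hu' Hsub Hl Hu2.
  by move: Hxv; rewrite -Hl /= eqxx.
have := Hac (c := u :: x :: y :: p') erefl.
have -> : uniq [:: u, x, y & p'] by rewrite cons_uniq Hu2 Hu'.
have -> : cycle e [:: u, x, y & p'].
  rewrite /cycle rcons_cons /= Hsym Hxu /=.
  move: Hp' => /= /andP[-> Hp']; rewrite rcons_path Hp' /=; rewrite -Hl in Hvu; exact: Hvu.
by [].
Qed.


Lemma no_bypass2 u x v w p q : e x u -> e v u -> x != v ->
  path e x p -> last x p = w -> path e v q -> last v q = w ->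
  u \notin x :: p -> u \notin v :: q -> False.
Proof.
move=> Hxu Hvu Hxv Hp Hl Hq Hlq Hup Huq.
have [q' [H1 H2 H3 H4]] := rev_walk Hq.
apply: (no_bypass (p := p ++ q') Hxu Hvu Hxv).
- by rewrite cat_path Hp Hl -Hlq H1.
- by rewrite last_cat Hl -Hlq H2.
- apply/negP; rewrite inE mem_cat => /orP[Hux|/orP[Hup'|Huq']].
  + by move: Hup; rewrite inE Hux.
  + by move: Hup; rewrite inE Hup' orbT.
  + by move: Huq (H4 _ Huq') => /negP.
Qed.

Lemma dist_parity u v w : e u v -> d u w != d v w.
Proof.
move=> Huv; apply/eqP => Heq.
have [p [Hs Hp Hl]] := dist_walk u w.
case: p Hs Hp Hl => [|y p'] Hs Hp Hl.
  move: Hs Heq => /= <- /esym /dist0 Hvw; move: Hl => /= Huw.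
  by move: Huv; rewrite Huw -Hvw Hirr.
have Hin z : z \in y :: p' -> d z w < d u w by apply: dist_inwalk.
have [q [Hs' Hq Hlq]] := dist_walk v w.
have Hinq z : z \in q -> d z w < d v w by apply: dist_inwalk.
move: Hp => /= /andP[Huy Hp'].
apply: (no_bypass2 (u := u) (x := y) (v := v) (p := p') (q := q) (w := w)).
- by rewrite Hsym.
- by rewrite Hsym.
- apply/negP => /eqP Hyv; have := Hin y (mem_head _ _); rewrite Hyv Heq ltnn //.
- exact: Hp'.
- exact: Hl.
- exact: Hq.
- exact: Hlq.
- by apply/negP => /Hin; rewrite ltnn.
- rewrite inE negb_or; apply/andP; split.
    by apply/negP => /eqP Huv'; move: Huv; rewrite Huv' Hirr.
  by apply/negP => /Hinq; rewrite Heq ltnn.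
Qed.

Lemma dist_fork x u v w : e x u -> e v u -> x != v ->
  d x w < d u w -> d v w < d u w -> False.
Proof.
move=> Hxu Hvu Hxv Hx Hv.
have [p [Hs Hp Hl]] := dist_walk x w.
have [q [Hs' Hq Hlq]] := dist_walk v w.
apply: (no_bypass2 Hxu Hvu Hxv Hp Hl Hq Hlq).
- rewrite inE negb_or; apply/andP; split.
    by apply/negP => /eqP Hux; move: Hx; rewrite Hux ltnn.
  apply/negP => Hin; have := dist_inwalk Hp Hl Hs Hin; lia.
- rewrite inE negb_or; apply/andP; split.
    by apply/negP => /eqP Hux; move: Hv; rewrite Hux ltnn.
  apply/negP => Hin; have := dist_inwalk Hq Hlq Hs' Hin; lia.
Qed.


Lemma convex x u v : e x u -> e u v -> x != v ->
  2 * status e u + 2 <= status e x + status e v.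
Proof.
move=> Hxu Huv Hxv.
have Hux : e u x by rewrite Hsym.
have Hvu : e v u by rewrite Hsym.
have pw w : d u w + d u w <= d x w + d v w.
  have h1 := dist_adjtri w Hux; have h2 := dist_adjtri w Hxu.
  have h3 := dist_adjtri w Huv; have h4 := dist_adjtri w Hvu.
  have /eqP h5 := dist_parity w Hxu; have /eqP h6 := dist_parity w Hvu.
  have h7 := @dist_fork x u v w Hxu Hvu Hxv.
  case: (ltnP (d x w) (d u w)) => H1; case: (ltnP (d v w) (d u w)) => H2.
  - by case: h7.
  - lia.
  - lia.
  - lia.
rewrite /status mul2n -addnn -!big_split /=.
rewrite [X in X + 2 <= _](bigD1 u) // [X in _ <= X](bigD1 u) //=.
rewrite dist_refl (dist_adj Hxu) (dist_adj Hvu) add0n addnC.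
by rewrite leq_add2l; apply: leq_sum => w _.
Qed.

Definition Ncl a b := \sum_(w : T) (d a w < d b w : nat).

Lemma status_adj a b : e a b -> status e a + 2 * Ncl a b = status e b + #|T|.
Proof.
move=> Hab.
have Hba : e b a by rewrite Hsym.
have pw w : d a w + 2 * (d a w < d b w) = d b w + 1.
  have h1 := dist_adjtri w Hab; have h2 := dist_adjtri w Hba.
  have /eqP h5 := dist_parity w Hab.
  case: ltnP => H /=; lia.
rewrite /Ncl /status big_distrr /= -big_split /=.
rewrite (eq_bigr _ (fun w _ => pw w)) big_split /= sum1_card //.
Qed.

Lemma leaf_dist x a w : e x a -> (forall y, e x y -> y = a) -> w != x ->
  d x w = d a w + 1.
Proof.
move=> Hxa Hleaf Hwx.
have Hax : e a x by rewrite Hsym.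
apply/eqP; rewrite eqn_leq (dist_adjtri w Hax) /=.
have [[|y p] [Hs Hp Hl]] := dist_walk x w.
  by move: Hwx; rewrite -Hl /= eqxx.
move: Hp => /= /andP[Hxy Hp]; rewrite -(Hleaf _ Hxy) -Hs /= addn1 ltnS.
exact: dist_le Hp Hl.
Qed.

Lemma Ncl_leaf x a : e x a -> (forall y, e x y -> y = a) -> Ncl x a = 1.
Proof.
move=> Hxa Hleaf; rewrite /Ncl (bigD1 x) //= dist_refl.
have Hax : a != x by apply/negP => /eqP Hax; move: Hxa; rewrite Hax Hirr.
rewrite dist_sym (dist_adj Hxa) /= big1 // => w Hwx.
by rewrite (leaf_dist Hxa Hleaf Hwx) ltnNge leq_addr.
Qed.

Lemma status_leaf x a : e x a -> (forall y, e x y -> y = a) ->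
  status e x + 2 = status e a + #|T|.
Proof.
move=> Hxa Hleaf; have := status_adj Hxa; rewrite Ncl_leaf //.
Qed.


Lemma sum_ind (A : {set T}) : \sum_(w : T) ((w \in A) : nat) = #|A|.
Proof. by rewrite -sum1_card [RHS]big_mkcond; apply: eq_bigr => w _; case: (w \in A). Qed.

Lemma Ncl_double a b (A B : {set T}) : e a b -> a \notin A -> b \notin A ->
  (forall w, w \in A -> e w a /\ forall y, e w y -> y = a) ->
  (forall w, w \in B -> e w b /\ forall y, e w y -> y = b) ->
  (forall w, [|| w == a, w == b, w \in A | w \in B]) ->
  Ncl a b = #|A| + 1.
Proof.
move=> Hab HaA HbA HA HB Hcov.
have Hba : e b a by rewrite Hsym.
have Hneq : b != a by apply/negP => /eqP E; move: Hab; rewrite E Hirr.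
have pw w : ((d a w < d b w) : nat) = (w \in A) + (w \in [set a]).
  rewrite inE; case: (eqVneq w a) => [->|Hwa].
    by rewrite dist_refl (dist_adj Hba) (negbTE HaA).
  case: (eqVneq w b) => [->|Hwb].
    by rewrite dist_refl (dist_adj Hab) (negbTE HbA).
  case HwA : (w \in A).
    have [Hwa' Hl] := HA w HwA.
    rewrite dist_sym (dist_adj Hwa') [d b w]dist_sym (leaf_dist Hwa' Hl) ?(dist_adj Hab) //.
    by rewrite eq_sym.
  have HwB : w \in B by move: (Hcov w); rewrite (negbTE Hwa) (negbTE Hwb) HwA.
  have [Hwb' Hl] := HB w HwB.
  rewrite [d b w]dist_sym (dist_adj Hwb') [d a w]dist_sym (leaf_dist Hwb' Hl) ?(dist_adj Hba) //.
  by rewrite eq_sym.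
rewrite /Ncl (eq_bigr (fun w => (w \in A) + (w \in [set a]))); last by move=> w _; exact: pw.
by rewrite big_split /= !sum_ind cards1.
Qed.

End Walks.

Section KStatus.
Variables (T : finType) (e : rel T).
Local Notation s := (status e).

Lemma mem_stat v : s v \in undup [seq s v | v <- enum T].
Proof. by rewrite mem_undup; apply: map_f; rewrite mem_enum. Qed.

Lemma k2_P3 : k_status e = 2 -> forall a b c,
  [|| s a == s b, s b == s c | s a == s c].
Proof.
rewrite /k_status => Hk a b c; apply: contraT; rewrite !negb_or => /and3P[h1 h2 h3].
have : size [:: s a; s b; s c] <= size (undup [seq s v | v <- enum T]).
  apply: uniq_leq_size.
    by rewrite /= !inE negb_or h1 h3 (negbTE h2).
  by move=> z; rewrite !inE => /or3P[]/eqP->; apply: mem_stat.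
by rewrite Hk.
Qed.

Lemma k2_two : k_status e = 2 -> exists y1 y2, s y1 != s y2.
Proof.
move=> Hk.
case: (boolP [exists y1, exists y2, s y1 != s y2]) => [/existsP[y1 /existsP[y2 H]]|H].
  by exists y1, y2.
have Hall y1 y2 : s y1 = s y2.
  apply/eqP; apply/negPn/negP => Hne; move/negP: H; apply.
  by apply/existsP; exists y1; apply/existsP; exists y2.
move: Hk; rewrite /k_status.
case E: (enum T) => [|y0 r] //.
have : size (undup [seq s v | v <- y0 :: r]) <= size [:: s y0].
  apply: uniq_leq_size; first exact: undup_uniq.
  by move=> z; rewrite mem_undup => /mapP[v _ ->]; rewrite inE (Hall v y0).
by move=> /= H1 H2; rewrite H2 in H1.
Qed.

Lemma k2_of (al be : nat) : al != be -> (forall v, s v = al \/ s v = be) ->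
  (exists v, s v = al) -> (exists v, s v = be) -> k_status e = 2.
Proof.
move=> Hne Hv [va Ha] [vb Hb]; rewrite /k_status.
apply/eqP; rewrite eqn_leq; apply/andP; split.
  have -> : 2 = size [:: al; be] by [].
  apply: uniq_leq_size; first exact: undup_uniq.
  move=> z; rewrite mem_undup => /mapP[v _ ->]; rewrite !inE.
  by case: (Hv v) => ->; rewrite eqxx ?orbT.
have -> : 2 = size [:: al; be] by [].
apply: uniq_leq_size; first by rewrite /= inE Hne.
by move=> z; rewrite !inE => /orP[]/eqP->; [rewrite -Ha | rewrite -Hb]; apply: mem_stat.
Qed.

End KStatus.

Lemma card3 (T : finType) (x y z : T) : x != y -> x != z -> y != z -> 2 < #|T|.
Proof.
move=> h1 h2 h3.
rewrite cardE; apply: (uniq_leq_size (s1 := [:: x; y; z])).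
  by rewrite /= !inE negb_or h1 h2 h3.
by move=> w _; rewrite mem_enum.
Qed.

Section Forward.
Variables (T : finType) (e : rel T).
Hypotheses (Hirr : irreflexive e) (Hsym : symmetric e) (Hc : connected_graph e)
  (Hac : acyclic_graph e) (Hk : k_status e = 2).
Local Notation s := (status e).
Local Notation d := (dist e).

Definition internal u := [exists x, exists v, e u x && e u v && (x != v)].

Lemma internalP u : reflect (exists x v, [/\ e u x, e u v & x != v]) (internal u).
Proof.
apply: (iffP existsP) => [[x /existsP[v /andP[/andP[h1 h2] h3]]]|[x [v [h1 h2 h3]]]].
  by exists x, v.
by exists x; apply/existsP; exists v; rewrite h1 h2 h3.
Qed.

Lemma leafP x a : ~~ internal x -> e x a -> forall y, e x y -> y = a.
Proof.
move=> Hn Hxa y Hxy; apply/eqP; apply: contraT => Hya.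
by case/negP: Hn; apply/internalP; exists y, a.
Qed.

Lemma minM u : internal u -> forall y, s u <= s y.
Proof.
case/internalP => x [v [Hux Huv Hxv]] y.
have Hxu : e x u by rewrite Hsym.
have := convex Hc Hirr Hsym Hac Hxu Huv Hxv.
case/or3P: (k2_P3 Hk y u x) => /eqP h1; case/or3P: (k2_P3 Hk y u v) => /eqP h2; lia.
Qed.

Lemma F1 c b x : internal c -> e c b -> e c x -> internal b -> internal x -> b = x.
Proof.
move=> Hic Hcb Hcx Hib Hix; apply/eqP; apply: contraT => Hne.
have Hbc : e b c by rewrite Hsym.
have := convex Hc Hirr Hsym Hac Hbc Hcx Hne.
have := minM Hib c; have := minM Hix c; have := minM Hic b. lia.
Qed.

Lemma exists_internal : exists u, internal u.
Proof.
have [y1 [y2 Hne]] := k2_two Hk.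
case: (boolP [exists u, internal u]) => [/existsP//|Hno].
have Hno' u : ~~ internal u by apply/negP => Hu; move/negP: Hno; apply; apply/existsP; exists u.
exfalso.
have [p [Hs Hp Hl]] := dist_walk Hc y1 y2.
case: p Hs Hp Hl => [|z1 [|z2 r]] Hs Hp Hl.
- by move: Hne; rewrite -Hl /= eqxx.
- move: Hp Hl => /= /andP[H12 _] Hz; rewrite Hz in H12.
  have H21 : e y2 y1 by rewrite Hsym.
  have := status_leaf Hc Hirr Hsym Hac H12 (leafP (Hno' y1) H12).
  have := status_leaf Hc Hirr Hsym Hac H21 (leafP (Hno' y2) H21).
  move: Hne => /eqP; lia.
- move: (Hp) => /= /andP[H1 /andP[H2 _]].
  have Hin : z2 \in [:: z1, z2 & r] by rewrite !inE eqxx orbT.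
  have := dist_inwalk Hc Hp Hl Hs Hin => Hlt.
  have Hz2 : y1 != z2 by apply/negP => /eqP E; move: Hlt; rewrite E ltnn.
  move/negP: (Hno' z1); apply; apply/internalP; exists y1, z2; split => //.
  by rewrite Hsym.
Qed.

Lemma star_case a : internal a -> (forall b, e a b -> ~~ internal b) -> is_star e.
Proof.
move=> Ha Hnb.
have key w : w != a -> e a w.
  move=> Hwa; have [p [Hs Hp Hl]] := dist_walk Hc a w.
  case: p Hs Hp Hl => [|p1 [|p2 r]] Hs Hp Hl.
  - by move: Hwa; rewrite -Hl /= eqxx.
  - by move: Hp Hl => /= /andP[H _] <-.
  - move: (Hp) => /= /andP[H1 /andP[H2 _]].
    have Hin : p2 \in [:: p1, p2 & r] by rewrite !inE eqxx orbT.
    have := dist_inwalk Hc Hp Hl Hs Hin => Hlt.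
    have Hz2 : a != p2 by apply/negP => /eqP E; move: Hlt; rewrite E ltnn.
    exfalso; move/negP: (Hnb _ H1); apply; apply/internalP; exists a, p2; split => //.
    by rewrite Hsym.
split.
  case/internalP: (Ha) => x [v [h1 h2 h3]].
  apply: (card3 (x := a) (y := x) (z := v)) => //.
    by apply/negP => /eqP E; move: h1; rewrite -E Hirr.
  by apply/negP => /eqP E; move: h2; rewrite -E Hirr.
exists a => x y.
case: (eqVneq x a) => [->|Hxa]; case: (eqVneq y a) => [->|Hya] /=.
- by rewrite Hirr.
- by rewrite key.
- by rewrite Hsym key.
- apply/negP => Hxy.
  have Hax := key _ Hxa.
  move/negP: (Hnb _ Hax); apply; apply/internalP; exists y, a; split => //.
  by rewrite Hsym.
Qed.

End Forward.

Section Forward2.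
Variables (T : finType) (e : rel T).
Hypotheses (Hirr : irreflexive e) (Hsym : symmetric e) (Hc : connected_graph e)
  (Hac : acyclic_graph e) (Hk : k_status e = 2).
Local Notation s := (status e).
Local Notation d := (dist e).

Lemma dstar_case a b : internal e a -> internal e b -> e a b -> is_balanced_double_star e.
Proof.
move=> Ha Hb Hab.
have Hba : e b a by rewrite Hsym.
have Hneq : a != b by apply/negP => /eqP E; move: Hab; rewrite E Hirr.
have U1 w : e a w -> internal e w -> w = b.
  by move=> Haw Hw; apply: esym; apply: (F1 Hirr Hsym Hc Hac Hk Ha Hab Haw Hb Hw).
have U2 w : e b w -> internal e w -> w = a.
  by move=> Hbw Hw; apply: esym; apply: (F1 Hirr Hsym Hc Hac Hk Hb Hba Hbw Ha Hw).
pose A := [set w | e a w && (w != b)].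
pose B := [set w | e b w && (w != a)].
have leafA w : w \in A -> e w a /\ forall y, e w y -> y = a.
  rewrite inE => /andP[Haw Hwb]; have Hwa : e w a by rewrite Hsym.
  split => //; apply: leafP Hwa; apply/negP => Hiw.
  by move: Hwb; rewrite (U1 _ Haw Hiw) eqxx.
have leafB w : w \in B -> e w b /\ forall y, e w y -> y = b.
  rewrite inE => /andP[Hbw Hwa]; have Hwb : e w b by rewrite Hsym.
  split => //; apply: leafP Hwb; apply/negP => Hiw.
  by move: Hwa; rewrite (U2 _ Hbw Hiw) eqxx.
have cover w : [|| w == a, w == b, w \in A | w \in B].
  have [p [Hs Hp Hl]] := dist_walk Hc a w.
  case: p Hs Hp Hl => [|p1 [|p2 r]] Hs Hp Hl.
  - by move: Hl => /= ->; rewrite eqxx.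
  - move: Hp Hl => /= /andP[H _] <-.
    case: (eqVneq p1 b) => [->|Hpb]; first by rewrite orbT.
    by rewrite inE H Hpb /= !orbT.
  - move: (Hp) => /= /andP[H1 /andP[H2 Hr]].
    have Hin : p2 \in [:: p1, p2 & r] by rewrite !inE eqxx orbT.
    have := dist_inwalk Hc Hp Hl Hs Hin => Hlt.
    have Hz2 : p2 != a by apply/negP => /eqP E; move: Hlt; rewrite E ltnn.
    have Hip1 : internal e p1.
      apply/internalP; exists a, p2; split => //; first by rewrite Hsym.
      by rewrite eq_sym.
    have Ep1 := U1 _ H1 Hip1; subst p1.
    have Hp2B : p2 \in B by rewrite inE H2 Hz2.
    case: r Hs Hp Hl Hr Hin Hlt => [|p3 r] Hs Hp Hl Hr Hin Hlt.
      by move: Hl => /= <-; rewrite Hp2B !orbT.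
    exfalso.
    move: Hr => /= /andP[H3 _].
    have E1 := dist_split Hc (q := [:: b; p2]) (y := p3) (r := r) Hp Hl Hs.
    have E2 := dist_split Hc (q := [::]) (y := b) (r := [:: p2, p3 & r]) Hp Hl Hs.
    have Hp3 : b != p3 by apply/negP => /eqP E; move: E2; rewrite E E1 /=; lia.
    have Hip2 : internal e p2.
      apply/internalP; exists b, p3; split => //; by rewrite Hsym.
    by move: Hz2; rewrite (U2 _ H2 Hip2) eqxx.
have HaA : a \notin A by rewrite inE Hirr.
have HbA : b \notin A by rewrite inE eqxx andbF.
have HaB : a \notin B by rewrite inE eqxx andbF.
have HbB : b \notin B by rewrite inE Hirr.
have HAB w : w \in A -> w \in B -> False.
  by move=> /leafA [_ Hl] /leafB [Hwb _]; move: Hneq; rewrite (Hl _ Hwb) eqxx.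
exists a, b, A, B; split; [split|split; [split|]].
- exact: Hneq.
- by rewrite in_setU negb_or HaA HaB.
- by rewrite in_setU negb_or HbA HbB.
- by apply/pred0P => w /=; apply/negP => /andP[h1 h2]; apply: (HAB w).
- apply/setP => w; rewrite in_setT !in_setU !in_set1; move: (cover w).
  by case/or4P => ->; rewrite ?orbT.
- have N1 := Ncl_double Hc Hirr Hsym Hab HaA HbA leafA leafB cover.
  have cover' w : [|| w == b, w == a, w \in B | w \in A].
    by move: (cover w); case: (w == a); case: (w == b); case: (w \in A); case: (w \in B).
  have N2 := Ncl_double Hc Hirr Hsym Hba HbB HaB leafB leafA cover'.
  have S1 := status_adj Hc Hirr Hsym Hac Hab.
  have S2 := status_adj Hc Hirr Hsym Hac Hba.
  have M1 := minM Hirr Hsym Hc Hac Hk Ha b.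
  have M2 := minM Hirr Hsym Hc Hac Hk Hb a.
  lia.
- case/internalP: Ha => x [v [h1 h2 h3]].
  apply/card_gt0P.
  case: (eqVneq x b) => [Exb|Hxb].
    exists v; rewrite inE h2 /=; by rewrite -Exb eq_sym.
  by exists x; rewrite inE h1.
- move=> x y; apply/idP/idP.
  + move=> Hxy.
    case: (eqVneq x a) => [Exa|Hxa].
      subst x; case: (eqVneq y b) => [->|Hyb]; first by rewrite ?(eqxx a) ?(eqxx b).
      by rewrite ?(eqxx a) inE Hxy Hyb /= ?orbT.
    case: (eqVneq x b) => [Exb|Hxb].
      subst x; case: (eqVneq y a) => [->|Hya]; first by rewrite ?(eqxx a) ?(eqxx b) /= ?orbT.
      by rewrite ?(eqxx b) /= inE Hxy Hya.
    move: (cover x); rewrite (negbTE Hxa) (negbTE Hxb) /= => /orP[HxA|HxB].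
      have [_ Hl] := leafA x HxA; rewrite (Hl _ Hxy) HxA ?(eqxx a) /=.
      by rewrite ?orbT.
    have [_ Hl] := leafB x HxB; rewrite (Hl _ Hxy) HxB ?(eqxx b) /=.
    by rewrite ?orbT.
  + move=> /orP[/orP[/orP[/orP[/orP[/andP[/eqP-> /eqP->]|/andP[/eqP-> /eqP->]]|/andP[/eqP-> Hy]]|/andP[/eqP-> Hx]]|/andP[/eqP-> Hy]]|/andP[/eqP-> Hx]].
    * exact: Hab.
    * exact: Hba.
    * by rewrite Hsym; case: (leafA _ Hy).
    * by case: (leafA _ Hx).
    * by rewrite Hsym; case: (leafB _ Hy).
    * by case: (leafB _ Hx).
Qed.

End Forward2.

Unset Implicit Arguments.

Theorem proposition3p5 (T : finType) (e : rel T) :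
  is_tree e ->
  (k_status e = 2 <-> is_star e \/ is_balanced_double_star e).
Proof.
rewrite /is_tree /simple_graph => -[[Hirr Hsym] Hc Hac]; split.
  move=> Hk.
  have [a Ha] := exists_internal Hirr Hsym Hc Hac Hk.
  case: (boolP [exists b, e a b && internal e b]) => [/existsP[b /andP[Hab Hb]]|Hno].
    by right; apply: (dstar_case Hirr Hsym Hc Hac Hk Ha Hb Hab).
  left; apply: (star_case Hirr Hsym Hc Ha) => b Hab; apply/negP => Hb.
  by move/negP: Hno; apply; apply/existsP; exists b; rewrite Hab Hb.
case.
  case=> Hn [c Hedge].
  have leaf x : x != c -> e x c /\ forall y, e x y -> y = c.
    move=> Hxc; split; first by rewrite Hedge eqxx Hxc (negbTE Hxc).
    by move=> y; rewrite Hedge (negbTE Hxc) /= => /andP[/eqP-> _].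
  apply: (@k2_of _ _ (status e c) (status e c + #|T| - 2)).
  - apply/negP => /eqP; lia.
  - move=> v; case: (eqVneq v c) => [->|Hvc]; first by left.
    have [H1 H2] := leaf v Hvc; have := status_leaf Hc Hirr Hsym Hac H1 H2.
    right; lia.
  - by exists c.
  - have : 0 < #|predC1 c| by rewrite cardC1; lia.
    case/card_gt0P => x Hx; have Hxc : x != c by exact: Hx.
    have [H1 H2] := leaf x Hxc; have := status_leaf Hc Hirr Hsym Hac H1 H2.
    by exists x; lia.
rewrite /is_balanced_double_star => -[a [b [A [B [[Hab HaAB HbAB Hdis] [[Hcov HAB HA0] Hedge]]]]]].
move: HaAB HbAB; rewrite !in_setU !negb_or => /andP[HaA HaB] /andP[HbA HbB].
have leafA w : w \in A -> e w a /\ forall y, e w y -> y = a.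
  move=> HwA.
  have Hwa : w != a by apply/negP => /eqP E; move: HaA; rewrite -E HwA.
  have Hwb : w != b by apply/negP => /eqP E; move: HbA; rewrite -E HwA.
  have HwB : w \in B = false by apply: disjointFr Hdis HwA.
  split; first by rewrite Hedge eqxx HwA !orbT.
  move=> y; rewrite Hedge (negbTE Hwa) (negbTE Hwb) HwB HwA /=.
  by rewrite andbT andbF !orbF => /eqP.
have leafB w : w \in B -> e w b /\ forall y, e w y -> y = b.
  move=> HwB.
  have Hwa : w != a by apply/negP => /eqP E; move: HaB; rewrite -E HwB.
  have Hwb : w != b by apply/negP => /eqP E; move: HbB; rewrite -E HwB.
  have HwA : w \in A = false by apply: disjointFl Hdis HwB.
  split; first by rewrite Hedge eqxx HwB !orbT.
  move=> y; rewrite Hedge (negbTE Hwa) (negbTE Hwb) HwB HwA /=.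
  by rewrite andbT andbF !orbF => /eqP.
have cover w : [|| w == a, w == b, w \in A | w \in B].
  have : w \in A :|: B :|: [set a; b] by rewrite Hcov inE.
  rewrite !in_setU !in_set1.
  by case: (w == a); case: (w == b); case: (w \in A); case: (w \in B).
have cover' w : [|| w == b, w == a, w \in B | w \in A].
  by move: (cover w); case: (w == a); case: (w == b); case: (w \in A); case: (w \in B).
have Heab : e a b by rewrite Hedge !eqxx.
have Heba : e b a by rewrite Hsym.
have N1 := Ncl_double Hc Hirr Hsym Heab HaA HbA leafA leafB cover.
have N2 := Ncl_double Hc Hirr Hsym Heba HbB HaB leafB leafA cover'.
have S1 := status_adj Hc Hirr Hsym Hac Heab.
have S2 := status_adj Hc Hirr Hsym Hac Heba.
have Hsab : status e a = status e b by lia.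
have [w0 Hw0] : exists w0, w0 \in A by apply/card_gt0P.
have Hn : 2 < #|T|.
  apply: (card3 (x := a) (y := b) (z := w0)) => //.
    by apply/negP => /eqP E; move: HaA; rewrite E Hw0.
  by apply/negP => /eqP E; move: HbA; rewrite E Hw0.
apply: (@k2_of _ _ (status e a) (status e a + #|T| - 2)).
- apply/negP => /eqP; lia.
- move=> v; case/or4P: (cover v) => [/eqP->|/eqP->|HvA|HvB].
  + by left.
  + by left.
  + have [H1 H2] := leafA v HvA; have := status_leaf Hc Hirr Hsym Hac H1 H2.
    right; lia.
  + have [H1 H2] := leafB v HvB; have := status_leaf Hc Hirr Hsym Hac H1 H2.
    right; lia.
- by exists a.
- have [H1 H2] := leafA w0 Hw0; have := status_leaf Hc Hirr Hsym Hac H1 H2.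
  by exists w0; lia.
Qed.
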